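(* Let $H$, $G$ be real Hilbert spaces, $Z$ a nonempty closed convex subset of $H\times G$, $x_0\in H\times G$, $\{\lambda_n\}\subset(0,1]$, $\{H_n\}$ closed convex sets with $Z\subset H_n$, and let $\{x_n\},\{x_{n+1/2}\}$ be generated by $x_{n+1/2}=x_n+\lambda_n(P_{H_n}(x_n)-x_n)$, $x_{n+1}=P_{H(x_0,x_n)\cap C_n}(x_0)$, where each $C_n$ is closed convex with $Z\subset C_n\subset H(x_n,x_{n+1/2})$. Then for every $n\ge1$ and every $\bar x\in H(x_0,x_n)\cap H(x_n,x_{n+1/2})$, $$\|x_{n+1/2}-\bar x\|^2\le\|x_0-\bar x\|^2-\|x_n-x_0\|^2-\|x_{n+1/2}-x_n\|^2.$$
   Context: For $x,y\in H\times G$, $H(x,y):=\{h:\ \langle h-y\mid x-y\rangle\le 0\}$. $P_D$ is the metric projection onto a nonempty closed convex set $D$. *)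

(* Defs.v *)
From HB Require Import structures.
From mathcomp Require Import all_boot all_order all_algebra.
From mathcomp Require Import boolp classical_sets reals.
Set Implicit Arguments. Unset Strict Implicit. Unset Printing Implicit Defensive.
Import Order.TTheory GRing.Theory Num.Theory.
Local Open Scope ring_scope.
Local Open Scope classical_set_scope.

Definition inner_product (R : realType) (V : lmodType R) (ip : V -> V -> R) : Prop :=
  [/\ (forall x y, ip x y = ip y x),
      (forall x y z, ip (x + y) z = ip x z + ip y z),
      (forall (a : R) x y, ip (a *: x) y = a * ip x y),
      (forall x, 0 <= ip x x) &
      (forall x, ip x x = 0 -> x = 0)].

Section InnerSpace.
Variables (R : realType) (V : lmodType R) (ip : V -> V -> R).

Definition inorm (x : V) : R := Num.sqrt (ip x x).

Definition iconverges (u : nat -> V) (l : V) : Prop :=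
  forall e : R, 0 < e -> exists N, forall n, (N <= n)%N -> inorm (u n - l) < e.

Definition icauchy (u : nat -> V) : Prop :=
  forall e : R, 0 < e -> exists N, forall m n, (N <= m)%N -> (N <= n)%N ->
    inorm (u m - u n) < e.

Definition icomplete : Prop :=
  forall u, icauchy u -> exists l, iconverges u l.

Definition iclosed (D : set V) : Prop :=
  forall (u : nat -> V) l, (forall n, D (u n)) -> iconverges u l -> D l.

Definition convex_set (D : set V) : Prop :=
  forall x y (t : R), D x -> D y -> 0 <= t <= 1 -> D ((1 - t) *: x + t *: y).

Definition halfsp (x y : V) : set V := [set h | ip (h - y) (x - y) <= 0].

Definition is_proj (D : set V) (x p : V) : Prop :=
  D p /\ forall z, D z -> inorm (x - p) <= inorm (x - z).

End InnerSpace.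

(* Main.v *)
Require Import Defs.
From HB Require Import structures.
From mathcomp Require Import all_boot all_order all_algebra.
From mathcomp Require Import boolp classical_sets reals.
From mathcomp Require Import lra.
Import Order.TTheory GRing.Theory Num.Theory.
Local Open Scope ring_scope.
Local Open Scope classical_set_scope.

Theorem corollary13 (R : realType) (V : lmodType R) (ip : V -> V -> R)
  (Z : set V) (x xh p : nat -> V) (lam : nat -> R) (Hs Cs : nat -> set V) :
  inner_product ip -> icomplete ip ->
  Z !=set0 -> iclosed ip Z -> convex_set Z ->
  (forall n, 0 < lam n <= 1) ->
  (forall n, iclosed ip (Hs n) /\ convex_set (Hs n) /\ Z `<=` Hs n) ->
  (forall n, is_proj ip (Hs n) (x n) (p n)) ->
  (forall n, xh n = x n + lam n *: (p n - x n)) ->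
  (forall n, iclosed ip (Cs n) /\ convex_set (Cs n) /\
             Z `<=` Cs n /\ Cs n `<=` halfsp ip (x n) (xh n)) ->
  (forall n, is_proj ip (halfsp ip (x 0%N) (x n) `&` Cs n) (x 0%N) (x n.+1)) ->
  forall n, (1 <= n)%N ->
  forall xb, halfsp ip (x 0%N) (x n) xb -> halfsp ip (x n) (xh n) xb ->
  inorm ip (xh n - xb) ^+ 2 <=
    inorm ip (x 0%N - xb) ^+ 2 - inorm ip (x n - x 0%N) ^+ 2
    - inorm ip (xh n - x n) ^+ 2.
Proof.
move=> [ipC ipDl ipZl ipge0 _] _ _ _ _ _ _ _ _ _ _ n _ xb H1 H2.
have ipDr : forall a b c, ip a (b + c) = ip a b + ip a c.
  by move=> a b c; rewrite ipC ipDl ipC [ip c a]ipC.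
have ipNl : forall a b, ip (- a) b = - ip a b.
  by move=> a b; rewrite -scaleN1r ipZl mulN1r.
have ipNr : forall a b, ip a (- b) = - ip a b.
  by move=> a b; rewrite ipC ipNl ipC.
have sq : forall a, inorm ip a ^+ 2 = ip a a.
  by move=> a; rewrite /inorm sqr_sqrtr.
rewrite !sq; move: H1 H2; rewrite /halfsp /=.
set u := x 0%N - x n; set v := x n - xh n; set w := xh n - xb.
have e1 : xb - x n = - (v + w) by rewrite /v /w addrA subrK opprB.
have e2 : xb - xh n = - w by rewrite /w opprB.
have e3 : x 0%N - xb = u + v + w by rewrite /u /v /w !addrA !subrK.
have e4 : x n - x 0%N = - u by rewrite /u opprB.
have e5 : xh n - x n = - v by rewrite /v opprB.
rewrite e1 e2 e3 e4 e5 => H1 H2; clear e1 e2 e3 e4 e5; clearbody u v w.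
rewrite !ipNl !ipNr !ipDl !ipDr in H1 H2 *.
rewrite opprK.
rewrite ?(ipC v u) ?(ipC w u) ?(ipC w v) in H1 H2 *.
lra.
Qed.
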